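(* Let $A$ be an algebra of Engel type and let $I$ be a sandwich ideal of $A$. If $A/I$ is a Yagzhev algebra, then $A$ is a Yagzhev algebra.
   Context: An algebra here is a vector space $A$ over a field $\Bbbk$ of characteristic zero equipped with finitely many symmetric multilinear operations $\Psi_\ell:A^\ell\to A$, $2\le\ell\le m$. An ideal is a subspace $I$ such that $\Psi_\ell(a_1,\dots,a_\ell)\in I$ whenever some $a_i\in I$. A monomial is a formal expression built from variables by applying the operations $\Psi_\ell$; its degree is the number of occurrences of variables. $I$ is a sandwich ideal if for every $k\ge0$, every multilinear monomial $M(z_1,z_2,x_1,\dots,x_k)$ of degree $k+2$, every $z_1,z_2\in I$ and every $x_1,\dots,x_k\in A$, one has $M(z_1,z_2,x_1,\dots,x_k)=0$. Terms: $x$ is a term with $|x|=1$; if $t_1,\dots,t_\ell$ are terms then $\Psi_\ell(t_1,\dots,t_\ell)$ is a term with $|\cdot|=\sum|t_i|$ (distinct formal expressions are distinct terms). $A$ is a Yagzhev algebra if there is $q_0$ with $\sum_{|t|=q}t(a)=0$ for all $a\in A$ and all $q\ge q_0$. For $x\in A$ let $\mathrm{Ad}_{\ell-1}(x)$ be the linear map $y\mapsto\Psi_\ell(y,x,\dots,x)$, and let $E_s(x)=\sum \ell_1\cdots\ell_q\,\mathrm{Ad}_{\ell_1-1}(x)\circ\cdots\circ\mathrm{Ad}_{\ell_q-1}(x)$, summed over all $q\ge1$ and sequences with $2\le\ell_i\le m$ and $\sum(\ell_i-1)=s$ (the degree-$s$ component of $\sum_{k\ge0}(\sum_\ell\ell\,\mathrm{Ad}_{\ell-1}(x))^k$).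 $A$ is of Engel type if there is $s_0$ with $E_s(x)=0$ for all $x\in A$ and all $s\ge s_0$. *)

(* Defs.v *)
From HB Require Import structures.
From mathcomp Require Import all_boot all_order all_algebra.
Set Implicit Arguments. Unset Strict Implicit. Unset Printing Implicit Defensive.
Import GRing.Theory.
Local Open Scope ring_scope.

(* Formal expressions (monomials / terms): variables indexed by nat, and
   nodes [Op ts] standing for Psi_(size ts)(ts).  Ordered trees: distinct
   formal expressions are distinct terms. *)
Inductive term : Type := Var of nat | Op of seq term.

Section Algebra.
Variables (k : fieldType) (V : lmodType k) (m : nat) (Psi : nat -> seq V -> V).

Definition multilinear_ops : Prop :=
  forall l, (2 <= l <= m)%N -> forall (s : seq V), size s = l ->
  forall i, (i < l)%N -> forall (c : k) (x y : V),
    Psi l (set_nth 0 s i (c *: x + y)) =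
      c *: Psi l (set_nth 0 s i x) + Psi l (set_nth 0 s i y).

Definition symmetric_ops : Prop :=
  forall l, (2 <= l <= m)%N -> forall (s t : seq V), size s = l ->
    perm_eq s t -> Psi l s = Psi l t.

Definition is_algebra : Prop := multilinear_ops /\ symmetric_ops.

Definition subspace (I : pred V) : Prop :=
  0 \in I /\ forall (c : k) x y, x \in I -> y \in I -> c *: x + y \in I.

Definition is_ideal (I : pred V) : Prop :=
  subspace I /\
  forall l, (2 <= l <= m)%N -> forall s : seq V, size s = l ->
    has (fun a => a \in I) s -> Psi l s \in I.

Fixpoint wf_term (t : term) : bool :=
  match t with
  | Var _ => true
  | Op ts => (2 <= size ts <= m)%N && all wf_term ts
  end.

Fixpoint leaves (t : term) : seq nat :=
  match t with
  | Var i => [:: i]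
  | Op ts => flatten (map leaves ts)
  end.

Fixpoint eval (v : nat -> V) (t : term) : V :=
  match t with
  | Var i => v i
  | Op ts => Psi (size ts) (map (eval v) ts)
  end.

(* Sandwich ideal: every multilinear monomial M(z1,z2,x1..xk) of degree k+2
   (leaves = a permutation of the variables 0..k+1, with z1 = var 0,
   z2 = var 1) vanishes when z1, z2 are in I. *)
Definition sandwich_ideal (I : pred V) : Prop :=
  is_ideal I /\
  forall (n : nat) (M : term), wf_term M ->
    perm_eq (leaves M) (iota 0 n.+2) ->
    forall v : nat -> V, v 0%N \in I -> v 1%N \in I -> eval v M = 0.

(* Enumeration of all terms in the single variable x (= Var 0) of degree q. *)
Fixpoint tuples_of (f : nat -> seq term) (l q : nat) : seq (seq term) :=
  match l with
  | 0 => if q == 0%N then [:: [::]] else [::]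
  | l'.+1 => flatten [seq [seq t :: ts | t <- f j, ts <- tuples_of f l' (q - j)]
                     | j <- iota 1 q]
  end.

Fixpoint terms_fuel (n q : nat) : seq term :=
  match n with
  | 0 => [::]
  | n'.+1 => (if q == 1%N then [:: Var 0] else [::]) ++
      flatten [seq [seq Op ts | ts <- tuples_of (terms_fuel n') l q]
              | l <- iota 2 (m - 1)]
  end.

Definition terms_of_degree (q : nat) : seq term := terms_fuel q q.

Definition Yagzhev : Prop :=
  exists q0 : nat, forall q, (q0 <= q)%N -> forall a : V,
    \sum_(t <- terms_of_degree q) eval (fun _ => a) t = 0.

(* Ad_{l-1}(x) y = Psi_l(y, x, ..., x) *)
Definition Ad (l : nat) (x y : V) : V := Psi l (y :: nseq l.-1 x).

(* sequences (l_1 - 1, ..., l_q - 1), q >= 1, with 2 <= l_i <= m, summing to s *)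
Fixpoint comps_fuel (n s : nat) : seq (seq nat) :=
  match n with
  | 0 => [::]
  | n'.+1 => flatten [seq (if j == s then [:: [:: j]]
                            else [seq j :: c | c <- comps_fuel n' (s - j)])
                     | j <- iota 1 (m - 1) & (j <= s)%N]
  end.

Definition comps (s : nat) : seq (seq nat) := comps_fuel s s.

Definition E (s : nat) (x y : V) : V :=
  \sum_(c <- comps s)
     (\prod_(j <- c) j.+1)%:R *: foldr (fun j acc => Ad j.+1 x acc) y c.

Definition Engel_type : Prop :=
  exists s0 : nat, forall s, (s0 <= s)%N -> forall x y : V, E s x y = 0.

End Algebra.

(* pi : A -> B is a surjective algebra homomorphism with kernel I,
   i.e. B is (isomorphic to) the quotient algebra A/I. *)
Definition quotient_map (k : fieldType) (A B : lmodType k) (m : nat)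
  (PsiA : nat -> seq A -> A) (PsiB : nat -> seq B -> B)
  (I : pred A) (pi : A -> B) : Prop :=
  [/\ forall (c : k) x y, pi (c *: x + y) = c *: pi x + pi y,
      forall l, (2 <= l <= m)%N -> forall s : seq A, size s = l ->
        pi (PsiA l s) = PsiB l (map pi s),
      forall b : B, exists a : A, pi a = b
    & forall a : A, pi a = 0 <-> a \in I].

(* Main.v *)
Require Import Defs.
From HB Require Import structures.
From mathcomp Require Import all_boot all_order all_algebra.
From mathcomp Require Import zify.
Set Implicit Arguments. Unset Strict Implicit. Unset Printing Implicit Defensive.
Import GRing.Theory.
Local Open Scope ring_scope.

Section Vand.
Variables (k : fieldType) (V : lmodType k).
Hypothesis ch0 : [pchar k] =i pred0.

Lemma vand (c : nat -> V) M :
  (forall i, (i < M)%N -> \sum_(e < M) (i%:R : k) ^+ e *: c e = 0) ->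
  forall e, (e < M)%N -> c e = 0.
Proof.
move=> h e he.
pose a : 'rV[k]_M := \row_(j < M) (j : nat)%:R.
pose Vm := Vandermonde M a.
have hu : Vm \in unitmx.
  rewrite unitmxE unitfE det_Vandermonde.
  apply/prodf_neq0 => i _; apply/prodf_neq0 => j hij.
  rewrite !mxE -natrB ?(ltnW hij) //.
  have /pcharf0P hc := ch0.
  by rewrite hc subn_eq0 -ltnNge.
have hV := mulmxV hu.
pose e' := Ordinal he.
have -> : c e = \sum_(i < M) ((1%:M : 'M[k]_M) i e') *: c i.
  rewrite (bigD1 e') //= mxE eqxx scale1r big1 ?addr0 // => i hi.
  by rewrite mxE (negbTE hi) scale0r.
rewrite -hV.
under eq_bigr do rewrite mxE scaler_suml.
rewrite exchange_big /= big1 // => p _.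
rewrite (eq_bigr (fun i : 'I_M => invmx Vm p e' *: ((p : nat)%:R ^+ (i : nat) *: c i))).
  by rewrite -scaler_sumr h ?scaler0.
by move=> i _; rewrite !mxE scalerA mulrC.
Qed.

Definition mev (s : seq (nat * V)) (x : k) := \sum_(y <- s) x ^+ y.1 *: y.2.
Definition coef (s : seq (nat * V)) (d : nat) := \sum_(y <- s) (if y.1 == d then y.2 else 0).

Lemma mev_coef s M x : (forall y, y \in s -> (y.1 < M)%N) ->
  mev s x = \sum_(d < M) x ^+ d *: coef s d.
Proof.
move=> hM; rewrite /mev /coef.
under [RHS]eq_bigr do rewrite scaler_sumr.
rewrite exchange_big /=; apply: eq_big_seq => y /hM hy.
rewrite (bigD1 (Ordinal hy)) //= eqxx big1 ?addr0 // => i hi.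
case: eqP => [e|]; last by rewrite scaler0.
by move: hi; rewrite -val_eqE /= e eqxx.
Qed.

Lemma le_sum1 (s : seq (nat * V)) y : y \in s -> (y.1 <= \sum_(z <- s) z.1)%N.
Proof.
elim: s => // z s IH; rewrite inE big_cons => /orP [/eqP -> | /IH h].
  exact: leq_addr.
exact: leq_trans h (leq_addl _ _).
Qed.

Lemma coef_uniq s t : (forall x, mev s x = mev t x) -> forall d, coef s d = coef t d.
Proof.
move=> h d.
pose M := (\sum_(z <- s ++ t) z.1).+1.
have hM : forall y, y \in s ++ t -> (y.1 < M)%N by move=> y /le_sum1.
have hs : forall y, y \in s -> (y.1 < M)%N by move=> y hy; apply: hM; rewrite mem_cat hy.
have ht : forall y, y \in t -> (y.1 < M)%N by move=> y hy; apply: hM; rewrite mem_cat hy orbT.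
case: (ltnP d M) => hd.
  apply/eqP; rewrite -subr_eq0; apply/eqP.
  apply: (vand (c := fun d => coef s d - coef t d)) hd => i _.
  under eq_bigr do rewrite scalerBr.
  by rewrite sumrB -(mev_coef _ hs) -(mev_coef _ ht) h subrr.
rewrite /coef !big1_seq // => y /andP [_ hy]; case: eqP => // e.
  by move: (ht _ hy); rewrite e ltnNge hd.
by move: (hs _ hy); rewrite e ltnNge hd.
Qed.

End Vand.

Section MevLemmas.
Variables (k : fieldType) (V : lmodType k).
Implicit Types (s t : seq (nat * V)).

Lemma mev_cat s t x : mev (s ++ t) x = mev s x + mev t x.
Proof. by rewrite /mev big_cat. Qed.

Lemma mev_flatten (ss : seq (seq (nat * V))) x : mev (flatten ss) x = \sum_(s <- ss) mev s x.
Proof. by rewrite /mev big_flatten. Qed.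

Lemma mev_scale c s x : mev [seq (y.1, c *: y.2) | y <- s] x = c *: mev s x.
Proof.
rewrite /mev big_map scaler_sumr; apply: eq_bigr => y _ /=.
by rewrite !scalerA mulrC.
Qed.

Lemma coef_cat s t d : coef (s ++ t) d = coef s d + coef t d.
Proof. by rewrite /coef big_cat. Qed.

Lemma coef_flatten (ss : seq (seq (nat * V))) d : coef (flatten ss) d = \sum_(s <- ss) coef s d.
Proof. by rewrite /coef big_flatten. Qed.

Lemma coef_scale c s d : coef [seq (y.1, c *: y.2) | y <- s] d = c *: coef s d.
Proof.
rewrite /coef big_map scaler_sumr; apply: eq_bigr => y _ /=.
by case: ifP; rewrite ?scaler0.
Qed.

Lemma coef_iota N (h : nat -> V) d :
  coef [seq (i, h i) | i <- iota 0 N] d = if (d < N)%N then h d else 0.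
Proof.
rewrite /coef big_map /= -big_mkcond /= -big_filter.
case: ltnP => hd.
  rewrite (@filter_pred1_uniq _ (iota 0 N) d) ?iota_uniq ?mem_iota //.
  by rewrite big_seq1.
rewrite big1_seq // => i /andP [_]; rewrite mem_filter mem_iota => /andP [/eqP -> hi].
by move: hi; rewrite add0n ltnNge hd.
Qed.

End MevLemmas.
Lemma set_nth_catc (T : Type) (x0 : T) pre post y x :
  set_nth x0 (pre ++ y :: post) (size pre) x = pre ++ x :: post.
Proof. by elim: pre => //= a pre ->. Qed.

Section Gen.
Variables (k : fieldType) (V : lmodType k) (m : nat) (Psi : nat -> seq V -> V).
Hypothesis ML : multilinear_ops m Psi.

Section Slot.
Variables (L : nat) (pre post : seq V).
Hypothesis hL : (2 <= L <= m)%N.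
Hypothesis hs : (size pre + (size post).+1)%N = L.

Lemma slot_lin c x y : Psi L (pre ++ (c *: x + y) :: post) =
  c *: Psi L (pre ++ x :: post) + Psi L (pre ++ y :: post).
Proof.
have hsz : size (pre ++ 0 :: post) = L by rewrite size_cat /= hs.
have hi : (size pre < L)%N by rewrite -hs -addSnnS leq_addr.
by have := ML hL hsz hi c x y; rewrite !set_nth_catc.
Qed.

Lemma slot0 : Psi L (pre ++ 0 :: post) = 0.
Proof.
have := slot_lin 1 0 0; rewrite !scale1r addr0.
set X := Psi L _ => h.
by apply: (addrI X); rewrite addr0 -h.
Qed.

Lemma slotD x y : Psi L (pre ++ (x + y) :: post) =
  Psi L (pre ++ x :: post) + Psi L (pre ++ y :: post).
Proof. by have := slot_lin 1 x y; rewrite !scale1r. Qed.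

Lemma slotZ c x : Psi L (pre ++ (c *: x) :: post) = c *: Psi L (pre ++ x :: post).
Proof. by have := slot_lin c x 0; rewrite !addr0 slot0 addr0. Qed.

Lemma slot_sum (I : Type) (r : seq I) (F : I -> V) :
  Psi L (pre ++ (\sum_(i <- r) F i) :: post) = \sum_(i <- r) Psi L (pre ++ F i :: post).
Proof.
elim: r => [|a r IH]; first by rewrite !big_nil slot0.
by rewrite !big_cons slotD IH.
Qed.
End Slot.

Lemma psi_has0 L s : (2 <= L <= m)%N -> size s = L -> 0 \in s -> Psi L s = 0.
Proof.
move=> hL hs /(nthP 0) [i hi hn].
have -> : s = take i s ++ 0 :: drop i.+1 s.
  by rewrite -[LHS](cat_take_drop i) (drop_nth 0 hi) hn.
apply: slot0 => //.
rewrite -hs size_take hi size_drop.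
by rewrite -addSnnS addnC subnK.
Qed.


Section Sand.
Hypothesis SY : symmetric_ops m Psi.
Variable I : pred V.
Hypothesis SW : sandwich_ideal m Psi I.

Lemma flatten_single (T : Type) (s : seq T) : flatten [seq [:: x] | x <- s] = s.
Proof. by elim: s => //= a s ->. Qed.

Lemma sandwich2 L s x y r : (2 <= L <= m)%N -> size s = L -> x \in I -> y \in I ->
  perm_eq s (x :: y :: r) -> Psi L s = 0.
Proof.
move=> hL hs hx hy hp.
rewrite (SY hL hs hp).
have ht : size (x :: y :: r) = L by rewrite -(perm_size hp).
set t := x :: y :: r in ht *.
have := SW.2 (L - 2)%N (Op (map Var (iota 0 L))) _ _ (nth 0 t) hx hy.
rewrite /= size_map size_iota -[X in Psi L X]map_comp.
have -> : map (eval Psi (nth 0 t) \o Var) (iota 0 L) = t.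
  by rewrite -[RHS](mkseq_nth 0 t) ht.
apply.
  by rewrite hL all_map; apply/allP.
rewrite -map_comp flatten_single.
have -> : [:: 0%N, 1%N & iota 2 (L - 2)] = iota 0 L by case: L hL {hs ht} => [|[|L]] //= _; rewrite subn2.
exact: perm_refl.
Qed.

Lemma linI L u v : v \in I -> forall n pre, (2 <= L <= m)%N -> (size pre + n)%N = L ->
  Psi L (pre ++ nseq n (u + v)) =
  Psi L (pre ++ nseq n u) + n%:R *: Psi L (v :: pre ++ nseq n.-1 u).
Proof.
move=> hv; elim=> [|n IH] pre hL hs; first by rewrite scale0r addr0.
have hs' : (size (rcons pre u) + n)%N = L by rewrite size_rcons addSnnS.
have hs'' : (size (rcons pre v) + n)%N = L by rewrite size_rcons addSnnS.
have hsl : (size pre + (size (nseq n (u + v)%R)).+1)%N = L by rewrite size_nseq.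
rewrite /= slotD //.
have e1 := IH (rcons pre u) hL hs'; have e2 := IH (rcons pre v) hL hs''.
rewrite !cat_rcons in e1 e2.
rewrite e1 e2.
have -> : n%:R *: Psi L (v :: pre ++ v :: nseq n.-1 u) = 0.
  case: n {IH e1 e2 hsl hs' hs''} hs => [|n] hs; first by rewrite scale0r.
  rewrite (@sandwich2 L _ v v (pre ++ nseq n u)) ?scaler0 //.
    by rewrite /= size_cat /= size_nseq -hs !addnS.
  by rewrite /= perm_cons -cat1s perm_catCA.
rewrite addr0.
have -> : Psi L (pre ++ v :: nseq n u) = Psi L (v :: pre ++ nseq n u).
  apply: (SY hL); first by rewrite size_cat /= size_nseq.
  by rewrite -cat1s perm_catCA.
case: n {IH e1 e2 hs' hs'' hsl} hs => [|n] hs.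
  by rewrite /= scale0r addr0 scale1r.
rewrite /= -addrA; congr (_ + _).
by rewrite -[(n.+2)%:R]natr1 scalerDl scale1r addrC.
Qed.

End Sand.

Fixpoint tuples (K n : nat) : seq (seq nat) :=
  if n is n'.+1 then [seq j :: c | j <- iota 0 K, c <- tuples K n'] else [:: [::]].

Fixpoint comp (l q : nat) : seq (seq nat) :=
  if l is l'.+1 then flatten [seq [seq j :: c | c <- comp l' (q - j)] | j <- iota 1 q]
  else (if q == 0%N then [:: [::]] else [::]).

Definition pev (K : nat) (g : nat -> V) (x : k) := \sum_(q <- iota 0 K) x ^+ q *: g q.

Lemma size_tuples K n c : c \in tuples K n -> size c = n.
Proof.
elim: n c => [|n IH] c /=; first by rewrite inE => /eqP ->.
by case/allpairsPdep => [j [c' [_ hc' ->]]] /=; rewrite (IH _ hc').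
Qed.

Lemma EXP L K (g : nat -> V) x n pre : (2 <= L <= m)%N -> (size pre + n)%N = L ->
  Psi L (pre ++ nseq n (pev K g x)) =
  mev [seq (sumn c, Psi L (pre ++ map g c)) | c <- tuples K n] x.
Proof.
move=> hL; elim: n pre => [|n IH] pre hs.
  by rewrite /mev /= big_seq1 /= expr0 scale1r.
rewrite /= {1}/pev (slot_sum hL); last by rewrite size_nseq.
rewrite /mev big_map big_allpairs_dep /=; apply: eq_bigr => q _.
rewrite (slotZ hL); last by rewrite size_nseq.
have := IH (rcons pre (g q)); rewrite cat_rcons => ->; last by rewrite size_rcons addSnnS.
rewrite /mev big_map scaler_sumr; apply: eq_bigr => c _ /=.
by rewrite scalerA exprD cat_rcons.
Qed.

Lemma comp_mem l q c : c \in comp l q ->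
  [/\ size c = l, all (fun j => 0 < j)%N c & sumn c = q].
Proof.
elim: l q c => [|l IH] q c /=.
  by case: q => [|q] //=; rewrite inE => /eqP ->.
case/flattenP => x /mapP [j hj ->] /mapP [c' /IH [h1 h2 h3] ->] /=.
move: hj; rewrite mem_iota => /andP [hj1 hj2].
rewrite h1 h2 h3 hj1; split => //.
by rewrite subnKC //; rewrite add1n ltnS in hj2.
Qed.

Lemma ltn_sumn (c : seq nat) x : all (fun j => 0 < j)%N c -> (1 < size c)%N -> x \in c ->
  (x < sumn c)%N.
Proof.
move=> ha hs hx.
have hp := perm_to_rem hx.
rewrite (perm_sumn hp) /=.
have : all (fun j => 0 < j)%N (x :: rem x c) by rewrite -(perm_all _ hp).
have : (1 < size (x :: rem x c))%N by rewrite -(perm_size hp).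
case: (rem x c) => [|z r] //= _ /and3P [_ hz _].
by rewrite -{1}[x]addn0 ltn_add2l ltn_addr.
Qed.

Lemma tup_sum (f : nat -> seq term) (ev : term -> V) l q pre :
  (2 <= size pre + l <= m)%N ->
  \sum_(ts <- tuples_of f l q) Psi (size pre + size ts) (pre ++ map ev ts) =
  \sum_(c <- comp l q) Psi (size pre + l) (pre ++ map (fun j => \sum_(t <- f j) ev t) c).
Proof.
elim: l q pre => [|l IH] q pre hL.
  by case: q => [|q] /=; rewrite ?big_seq1 ?big_nil.
rewrite /= !big_flatten /= !big_map; apply: eq_bigr => j _.
rewrite big_allpairs_dep big_map /=.
have e : forall t, \sum_(ts <- tuples_of f l (q - j))
    Psi (size pre + (size ts).+1) (pre ++ ev t :: map ev ts) =
  \sum_(c <- comp l (q - j)) Psi (size pre + l.+1)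
    (pre ++ ev t :: map (fun j => \sum_(t <- f j) ev t) c).
  move=> t; have := IH (q - j)%N (rcons pre (ev t)); rewrite size_rcons.
  have hL' : (1 < (size pre).+1 + l <= m)%N by rewrite addSnnS.
  move=> /(_ hL') h.
  transitivity (\sum_(ts <- tuples_of f l (q - j))
    Psi ((size pre).+1 + size ts) (rcons pre (ev t) ++ map ev ts)).
    by apply: eq_bigr => ts _; rewrite cat_rcons addSnnS.
  by rewrite h; apply: eq_bigr => c _; rewrite cat_rcons addSnnS.
under eq_bigr do rewrite e.
rewrite exchange_big /=; apply: eq_big_seq => c /comp_mem [hc _ _].
symmetry; apply: (slot_sum hL).
by rewrite size_map hc.
Qed.

Section Terms.
Variable a : V.
Definition Tf n q := \sum_(t <- terms_fuel m n q) eval Psi (fun _ => a) t.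

Lemma mem_iota2 l : l \in iota 2 (m - 1) -> (2 <= l <= m)%N.
Proof.
rewrite mem_iota => /andP [h1 h2]; apply/andP; split => //; lia.
Qed.

Lemma Tf_succ n q : Tf n.+1 q = (if q == 1%N then a else 0) +
  \sum_(l <- iota 2 (m - 1)) \sum_(c <- comp l q) Psi l (map (Tf n) c).
Proof.
rewrite /Tf /= big_cat; congr (_ + _).
  by case: (q == 1%N); rewrite ?big_seq1 ?big_nil.
rewrite big_flatten /= big_map; apply: eq_big_seq => l /mem_iota2 hl.
rewrite big_map.
exact: (@tup_sum (terms_fuel m n) (eval Psi (fun _ => a)) l q [::] hl).
Qed.

Lemma Tf_fuel n j : (j <= n)%N -> Tf n j = Tf n.+1 j.
Proof.
elim: n j => [|n IH] j hj.
  move: hj; rewrite leqn0 => /eqP ->.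
  rewrite Tf_succ /= add0r /Tf /= big_nil big1_seq // => l /andP [_ /mem_iota2 hl].
  by case: l hl => [|l] //= _; rewrite big_nil.
rewrite Tf_succ [RHS]Tf_succ; congr (_ + _); apply: eq_big_seq => l /mem_iota2 hl.
apply: eq_big_seq => c /comp_mem [h1 h2 h3]; congr (Psi l _); apply/eq_in_map => x hx.
apply: IH.
have := ltn_sumn h2 _ hx; rewrite h1 h3 => /(_ (proj1 (andP hl))) hx'.
by rewrite -ltnS; apply: leq_trans hx' hj.
Qed.

Lemma Tf_eq n j : (j <= n)%N -> Tf n j = Tf j j.
Proof.
elim: n => [|n IH] hj; first by move: hj; rewrite leqn0 => /eqP ->.
case: (ltngtP j n.+1) hj => // [hlt _| -> _]; last by [].
by rewrite -Tf_fuel // IH.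
Qed.

Definition T q := Tf q q.

Lemma T0 : T 0 = 0.
Proof. by rewrite /T /Tf big_nil. Qed.

Lemma R0T q : (0 < q)%N -> T q = (if q == 1%N then a else 0) +
  \sum_(l <- iota 2 (m - 1)) \sum_(c <- comp l q) Psi l (map T c).
Proof.
case: q => [|q] // _; rewrite /T Tf_succ; congr (_ + _).
apply: eq_big_seq => l /mem_iota2 hl.
apply: eq_big_seq => c /comp_mem [h1 h2 h3]; congr (Psi l _); apply/eq_in_map => x hx.
apply: Tf_eq.
have := ltn_sumn h2 _ hx; rewrite h1 h3 => /(_ (proj1 (andP hl))).
by rewrite ltnS.
Qed.

End Terms.

Section Eng.

Lemma comps_fuel_S n t : (t <= n)%N -> comps_fuel m n t = comps_fuel m n.+1 t.
Proof.
elim: n t => [|n IH] t ht.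
  move: ht; rewrite leqn0 => /eqP -> /=.
  rewrite (@eq_in_filter _ _ pred0) ?filter_pred0 // => j.
  by rewrite mem_iota => /andP [h _]; case: j h.
rewrite [LHS]/= [RHS]/=; congr flatten; apply/eq_in_map => j.
rewrite mem_filter mem_iota => /andP [hjt /andP [hj1 _]].
case: eqP => // hne; rewrite IH //; lia.
Qed.

Lemma comps_fuel_eq n t : (t <= n)%N -> comps_fuel m n t = comps m t.
Proof.
elim: n => [|n IH] ht; first by move: ht; rewrite leqn0 => /eqP ->.
case: (ltngtP t n.+1) ht => // [hlt _| -> _]; last by [].
by rewrite -comps_fuel_S // IH.
Qed.

Lemma comps_rec s : (0 < s)%N -> comps m s =
  flatten [seq (if j == s then [:: [:: j]] else [seq j :: c | c <- comps m (s - j)])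
          | j <- iota 1 (m - 1) & (j <= s)%N].
Proof.
case: s => [|s] // _; rewrite /comps [LHS]/=; congr flatten; apply/eq_in_map => j.
rewrite mem_filter mem_iota => /andP [hjt /andP [hj1 _]].
case: eqP => // hne; rewrite comps_fuel_eq //; lia.
Qed.

Lemma comps_fuel_mem n s c : c \in comps_fuel m n s -> all (fun j => 0 < j < m)%N c.
Proof.
elim: n s c => [|n IH] s c //=.
case/flattenP => x /mapP [j]; rewrite mem_filter mem_iota => /andP [_ /andP [hj1 hj2]] ->.
have hj : (0 < j < m)%N by apply/andP; split => //; lia.
case: eqP => _; first by rewrite inE => /eqP -> /=; rewrite hj.
by case/mapP => c' /IH hc' -> /=; rewrite hj.
Qed.

Variable x : V.

Lemma Ad_sum l (I : Type) (r : seq I) (F : I -> V) : (2 <= l <= m)%N ->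
  Ad Psi l x (\sum_(i <- r) F i) = \sum_(i <- r) Ad Psi l x (F i).
Proof.
move=> hl; rewrite /Ad; apply: (@slot_sum l [::] (nseq l.-1 x) hl).
by rewrite size_nseq /= prednK //; case/andP: hl => h _; apply: leq_trans h.
Qed.

Lemma Ad_Z l c y : (2 <= l <= m)%N -> Ad Psi l x (c *: y) = c *: Ad Psi l x y.
Proof.
move=> hl; rewrite /Ad; apply: (@slotZ l [::] (nseq l.-1 x) hl).
by rewrite size_nseq /= prednK //; case/andP: hl => h _; apply: leq_trans h.
Qed.

Lemma Ad_D l y z : (2 <= l <= m)%N -> Ad Psi l x (y + z) = Ad Psi l x y + Ad Psi l x z.
Proof.
move=> hl; rewrite /Ad; apply: (@slotD l [::] (nseq l.-1 x) hl).
by rewrite size_nseq /= prednK //; case/andP: hl => h _; apply: leq_trans h.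
Qed.

Lemma Ad_0 l : (2 <= l <= m)%N -> Ad Psi l x 0 = 0.
Proof.
move=> hl; rewrite /Ad; apply: (@slot0 l [::] (nseq l.-1 x) hl).
by rewrite size_nseq /= prednK //; case/andP: hl => h _; apply: leq_trans h.
Qed.

Definition E' s y := if s == 0%N then y else E m Psi s x y.

Lemma mem_iota1 j : j \in iota 1 (m - 1) -> (2 <= j.+1 <= m)%N.
Proof. rewrite mem_iota => /andP [h1 h2]; apply/andP; split; lia. Qed.

Lemma E_rec s y : (0 < s)%N -> E m Psi s x y =
  \sum_(j <- iota 1 (m - 1) | (j <= s)%N) (j.+1)%:R *: Ad Psi j.+1 x (E' (s - j)%N y).
Proof.
move=> hs; rewrite /E comps_rec // big_flatten big_map big_filter.
rewrite big_seq_cond [RHS]big_seq_cond; apply: eq_bigr => j /andP [/mem_iota1 hj hjs].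
case: eqP => [->|hne].
  by rewrite big_seq1 /= big_seq1 /E' subnn eqxx.
have hlt : (j < s)%N by rewrite ltn_neqAle hjs andbT; apply/eqP.
rewrite big_map /E' ifF; last by rewrite subn_eq0 leqNgt hlt.
rewrite /E Ad_sum // scaler_sumr; apply: eq_bigr => c _.
by rewrite big_cons /= natrM -scalerA Ad_Z.
Qed.

Lemma Ztrunc S y : \sum_(s < S.+1) E' s y = y +
  \sum_(j <- iota 1 (m - 1)) (j.+1)%:R *: Ad Psi j.+1 x (\sum_(s < (S.+1 - j)%N) E' s y).
Proof.
elim: S => [|S IH].
  rewrite big_ord1 /E' /= big1_seq ?addr0 // => j /andP [_ hj].
  have -> : (1 - j = 0)%N by move: hj; rewrite mem_iota; lia.
  by rewrite big_ord0 Ad_0 ?scaler0 // mem_iota1.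
rewrite big_ord_recr /= IH -addrA; congr (_ + _).
rewrite [E' S.+1 y]/E' /= E_rec // (big_mkcond (fun j => j <= S.+1)%N) -big_split /=.
apply: eq_big_seq => j /mem_iota1 hj.
case: leqP => hjS.
  have -> : (S.+2 - j = (S.+1 - j).+1)%N by lia.
  by rewrite big_ord_recr /= Ad_D // scalerDr.
have -> : (S.+2 - j = 0)%N by lia.
have -> : (S.+1 - j = 0)%N by lia.
by rewrite addr0.
Qed.

Variable s0 : nat.
Hypothesis hE : forall s, (s0 <= s)%N -> forall x y, E m Psi s x y = 0.

Definition Z y := \sum_(s < s0.+1) E' s y.

Lemma Z_big n y : (s0.+1 <= n)%N -> \sum_(s < n) E' s y = Z y.
Proof.
elim: n => [|n IH] // hn.
rewrite leq_eqVlt in hn; case/orP: hn => [/eqP e | hlt]; first by rewrite /Z e.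
rewrite big_ord_recr /= IH // /E' ifF; last by case: n hlt {IH}.
by rewrite hE ?addr0 //; rewrite ltnS in hlt; apply: ltnW.
Qed.

Lemma Zfix y : Z y = y + \sum_(j <- iota 1 (m - 1)) (j.+1)%:R *: Ad Psi j.+1 x (Z y).
Proof.
transitivity (\sum_(s < (s0 + m).+1) E' s y); first by rewrite Z_big // ltnS leq_addr.
rewrite Ztrunc; congr (_ + _).
apply: eq_big_seq => j; rewrite mem_iota => /andP [h1 h2].
by rewrite Z_big //; lia.
Qed.

End Eng.

Lemma bridge l N d (F : seq nat -> V) : (d < N)%N ->
  (forall c, size c = l -> 0%N \in c -> F c = 0) ->
  \sum_(c <- tuples N l) (if sumn c == d then F c else 0) = \sum_(c <- comp l d) F c.
Proof.
elim: l d F => [|l IH] d F hd hF.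
  by case: d hd => [|d] _; rewrite /= ?big_seq1 ?big_nil.
rewrite /= big_allpairs_dep big_flatten big_map.
have e : N = (d.+1 + (N - d.+1))%N by rewrite subnKC.
rewrite {1}e iotaD big_cat /= big_cons.
rewrite big1_seq ?add0r; last first.
  move=> c /andP [_ /size_tuples hc]; rewrite add0n; case: ifP => // _.
  by apply: hF; rewrite /= ?hc // inE eqxx.
rewrite [X in _ + X]big1_seq ?addr0; last first.
  move=> j /andP [_]; rewrite mem_iota => /andP [hj _].
  apply: big1 => c _; rewrite ifF //; apply/negbTE; rewrite neq_ltn; apply/orP; right.
  by apply: leq_trans hj (leq_addr _ _).
apply: eq_big_seq => j; rewrite mem_iota => /andP [hj1 hj2].
rewrite big_map -IH; last 2 first.
- by apply: leq_ltn_trans (leq_subr _ _) hd.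
- by move=> c hc h0; apply: hF; rewrite /= ?hc // inE h0 orbT.
apply: eq_bigr => c _.
have -> : (j + sumn c == d) = (sumn c == d - j)%N by apply/eqP/eqP; lia.
by [].
Qed.

Section Main.
Hypothesis SY : symmetric_ops m Psi.
Variable I : pred V.
Hypothesis SW : sandwich_ideal m Psi I.
Hypothesis ch0 : [pchar k] =i pred0.
Variable a : V.
Variable q0 : nat.
Hypothesis hq0 : (2 <= q0)%N.
Hypothesis hTI : forall q, (q0 <= q)%N -> T a q \in I.

Definition P q := if (q < q0)%N then T a q else 0.
Definition R q := if (q < q0)%N then 0 else T a q.
Definition Pl x := pev q0 P x.
Definition adlist l (s : seq (nat * V)) :=
  [seq (y.1 + sumn c, Psi l (y.2 :: map P c)) | y <- s, c <- tuples q0 l.-1].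
Definition Lop l (g : nat -> V) d := \sum_(c <- tuples q0 l.-1)
  (if (sumn c <= d)%N then Psi l (g (d - sumn c)%N :: map P c) else 0).
Definition Clist := flatten [seq [seq (sumn c, Psi l (map P c)) | c <- tuples q0 l]
                            | l <- iota 2 (m - 1)].
Definition C d := coef Clist d.
Definition C'list := Clist ++ [seq (d, - C d) | d <- iota 0 q0].
Definition C' d := if (q0 <= d)%N then C d else 0.
Definition Rec (g : nat -> V) d := C' d + \sum_(l <- iota 2 (m - 1)) l%:R *: Lop l g d.

Lemma P0 : P 0 = 0.
Proof. by rewrite /P; case: ifP => // _; exact: T0. Qed.

Lemma Ad_mev l s x : (2 <= l <= m)%N -> Ad Psi l (Pl x) (mev s x) = mev (adlist l s) x.
Proof.
move=> hl; have hl1 : (0 < l)%N by case/andP: hl => h _; apply: leq_trans h.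
rewrite /Ad {1}/mev (@slot_sum l [::] _ hl) ?size_nseq ?prednK //.
rewrite /mev /adlist big_allpairs_dep /=; apply: eq_bigr => y _.
rewrite (@slotZ l [::] _ hl) ?size_nseq ?prednK //=.
have hs1 : (size [:: y.2] + l.-1)%N = l by rewrite /= add1n prednK.
rewrite (@EXP l q0 P x l.-1 [:: y.2] hl hs1).
rewrite /mev big_map scaler_sumr; apply: eq_bigr => c _ /=.
by rewrite scalerA exprD.
Qed.

Lemma coef_adlist l s d : (2 <= l <= m)%N -> coef (adlist l s) d = Lop l (coef s) d.
Proof.
move=> hl; have hl1 : (0 < l)%N by case/andP: hl => h _; apply: leq_trans h.
rewrite /coef /adlist big_allpairs_dep /= exchange_big /Lop.
apply: eq_big_seq => c /size_tuples hc.
have hs : (size ([::] : seq V) + (size (map P c)).+1)%N = l by rewrite size_map hc prednK.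
case: leqP => hcd.
  rewrite (@slot_sum l [::] _ hl hs) /=.
  apply: eq_bigr => y _.
  have -> : (y.1 + sumn c == d) = (y.1 == d - sumn c)%N by apply/eqP/eqP; lia.
  by case: ifP => _ //; rewrite (@slot0 l [::] _ hl hs).
apply: big1 => y _; rewrite ifF //; apply/negbTE; rewrite neq_ltn; apply/orP; right.
by apply: leq_trans hcd (leq_addl _ _).
Qed.

Lemma Lop_ext l g g' d : (forall e, (e <= d)%N -> g e = g' e) -> Lop l g d = Lop l g' d.
Proof.
move=> h; apply: eq_bigr => c _; case: ifP => // _.
by rewrite h // leq_subr.
Qed.

Lemma coefC' d : coef C'list d = C' d.
Proof.
rewrite /C'list coef_cat -/(C d).
rewrite (coef_iota _ (fun d => - C d)) /C'.
by case: ltnP => _; rewrite ?addr0 ?subrr.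
Qed.

Lemma I_add x y : x \in I -> y \in I -> x + y \in I.
Proof. by move=> hx hy; have := SW.1.1.2 1 x y hx hy; rewrite scale1r. Qed.

Lemma I_scale c x : x \in I -> c *: x \in I.
Proof. by move=> hx; have := SW.1.1.2 c x 0 hx SW.1.1.1; rewrite addr0. Qed.

Lemma I_sum (J : Type) (r : seq J) (F : J -> V) : (forall j, F j \in I) -> \sum_(j <- r) F j \in I.
Proof.
move=> h; elim: r => [|j r IH]; first by rewrite big_nil; exact: SW.1.1.1.
by rewrite big_cons I_add.
Qed.

Lemma RI q : R q \in I.
Proof. rewrite /R; case: ltnP => h; [exact: SW.1.1.1 | exact: hTI]. Qed.

Lemma TPR q : T a q = P q + R q.
Proof. by rewrite /P /R; case: ifP; rewrite ?add0r ?addr0. Qed.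

Lemma R_high d : (q0 <= d)%N -> R d = Rec R d.
Proof.
move=> hd; rewrite /Rec /C' hd.
have hd2 : (1 < d)%N by apply: leq_trans hd.
pose Rlist := [seq (q, R q) | q <- iota 0 d.+1].
pose Llist := flatten [seq [seq (sumn c, Psi l (map (T a) c)) | c <- tuples d.+1 l]
                      | l <- iota 2 (m - 1)].
pose Rlist2 := Clist ++ flatten [seq [seq (y.1, l%:R *: y.2) | y <- adlist l Rlist]
                                 | l <- iota 2 (m - 1)].
have hmev : forall x, mev Llist x = mev Rlist2 x.
  move=> x.
  have hX : pev d.+1 (T a) x = Pl x + mev Rlist x.
    rewrite /pev /Pl /mev big_map.
    rewrite (eq_bigr (fun q => x ^+ q *: P q + x ^+ q *: R q)); last by move=> q _; rewrite TPR scalerDr.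
    rewrite big_split; congr (_ + _).
    have e : d.+1 = (q0 + (d.+1 - q0))%N by rewrite subnKC // ltnW.
    rewrite [in iota 0 _]e iotaD big_cat /= [X in _ + X]big1_seq ?addr0 // => q /andP [_].
    rewrite mem_iota => /andP [hq _].
    by rewrite /P ltnNge hq /= scaler0.
  have hRI : mev Rlist x \in I by rewrite /mev big_map; apply: I_sum => q; apply: I_scale; exact: RI.
  rewrite /Llist /Rlist2 mev_flatten mev_cat !mev_flatten !big_map -big_split /=.
  apply: eq_big_seq => l /mem_iota2 hl.
  have := @EXP l d.+1 (T a) x l [::] hl; rewrite /= => /(_ erefl) <-.
  have := @EXP l q0 P x l [::] hl; rewrite /= => /(_ erefl) <-.
  rewrite mev_scale -Ad_mev // hX.
  by have := @linI SY I SW l (Pl x) _ hRI l [::] hl erefl.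
have hc := coef_uniq ch0 hmev d.
rewrite /Llist /Rlist2 coef_cat -/(C d) !coef_flatten !big_map in hc.
have -> : R d = \sum_(l <- iota 2 (m - 1)) coef [seq (sumn c, Psi l [seq T a i | i <- c]) | c <- tuples d.+1 l] d.
  rewrite /R ltnNge hd /= (R0T a (ltnW hd2)) ifF; last by apply/negbTE; apply/eqP => e; move: hd2; rewrite e.
  rewrite add0r; apply: eq_big_seq => l /mem_iota2 hl.
  rewrite /coef big_map /= bridge //.
  move=> c hc0 h0; apply: psi_has0 => //; first by rewrite size_map.
  by rewrite -(T0 a); apply: map_f.
rewrite hc; congr (_ + _); apply: eq_big_seq => l /mem_iota2 hl.
rewrite coef_scale coef_adlist //; congr (_ *: _); apply: Lop_ext => e he.
by rewrite coef_iota ltnS he.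
Qed.


Variable s0 : nat.
Hypothesis hE : forall s, (s0 <= s)%N -> forall x y, E m Psi s x y = 0.

Definition foldlist (c : seq nat) t := foldr (fun j t => adlist j.+1 t) t c.

Lemma fold_mev c t x : all (fun j => 0 < j < m)%N c ->
  foldr (fun j acc => Ad Psi j.+1 (Pl x) acc) (mev t x) c = mev (foldlist c t) x.
Proof.
elim: c => //= j c IH /andP [hj hc]; rewrite IH // Ad_mev //; by case/andP: hj => h1 h2; rewrite ?ltnS ?h1.
Qed.

Definition Elist s t := flatten [seq [seq (y.1, (\prod_(j <- c) j.+1)%:R *: y.2)
  | y <- foldlist c t] | c <- comps m s].

Lemma E_mev s t x : E m Psi s (Pl x) (mev t x) = mev (Elist s t) x.
Proof.
rewrite /E /Elist mev_flatten big_map; apply: eq_big_seq => c /comps_fuel_mem hc.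
by rewrite mev_scale fold_mev.
Qed.

Definition E'list s t := if s == 0%N then t else Elist s t.

Lemma E'_mev s t x : E' (Pl x) s (mev t x) = mev (E'list s t) x.
Proof. by rewrite /E' /E'list; case: ifP => // _; rewrite E_mev. Qed.

Definition Zlist t := flatten [seq E'list s t | s <- iota 0 s0.+1].

Lemma Z_mev t x : Z (Pl x) s0 (mev t x) = mev (Zlist t) x.
Proof.
rewrite /Z -(big_mkord xpredT (fun s => E' (Pl x) s (mev t x))) /index_iota subn0 /Zlist mev_flatten big_map.
by apply: eq_bigr => s _; rewrite E'_mev.
Qed.

Definition g := coef (Zlist C'list).

Lemma g_rec d : g d = Rec g d.
Proof.
have hm : forall x, mev (Zlist C'list) x = mev (C'list ++ flatten
    [seq [seq (y.1, (j.+1)%:R *: y.2) | y <- adlist j.+1 (Zlist C'list)] | j <- iota 1 (m - 1)]) x.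
  move=> x; rewrite -Z_mev (@Zfix (Pl x) s0 hE (mev C'list x)) Z_mev mev_cat.
  congr (_ + _); rewrite [RHS]mev_flatten big_map; apply: eq_big_seq => j /mem_iota1 hj.
  by rewrite mev_scale Ad_mev.
have hc := coef_uniq ch0 hm d.
rewrite coef_cat coefC' [X in _ = _ + X]coef_flatten big_map in hc.
rewrite /g hc /Rec; congr (_ + _).
rewrite -[2%N]/(1 + 1)%N iotaDl big_map; apply: eq_big_seq => j /mem_iota1 hj.
by rewrite coef_scale coef_adlist // add1n.
Qed.

Lemma R_low d : (d < q0)%N -> R d = Rec R d.
Proof.
move=> hd; rewrite /Rec /C' /R hd leqNgt hd /= add0r big1_seq // => l /andP [_ /mem_iota2 hl].
rewrite /Lop big1_seq ?scaler0 // => c /andP [_ /size_tuples hc].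
case: ifP => // _.
have -> : (d - sumn c < q0)%N by apply: leq_ltn_trans (leq_subr _ _) hd.
apply: psi_has0 => //; last by rewrite inE eqxx.
by rewrite /= size_map hc prednK //; case/andP: hl => h _; apply: leq_trans h.
Qed.

Lemma R_rec d : R d = Rec R d.
Proof. by case: (ltnP d q0) => h; [apply: R_low | apply: R_high]. Qed.

Lemma Rg d : R d = g d.
Proof.
elim/ltn_ind: d => d IH.
rewrite R_rec g_rec /Rec; congr (_ + _); apply: eq_big_seq => l /mem_iota2 hl.
congr (_ *: _); apply: eq_big_seq => c /size_tuples hc.
case: ifP => // hcd.
have hl1 : (0 < l)%N by case/andP: hl => h _; apply: leq_trans h.
case: (posnP (sumn c)) => hs; last by rewrite IH //; lia.
have h0 : 0 \in map P c.
  have : (0 < size c)%N by rewrite hc; case/andP: hl => h _; rewrite -ltnS prednK.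
  case: c hc hs {hcd} => [|x c] //= _ hs _.
  have -> : x = 0%N by lia.
  by rewrite P0 inE eqxx.
have hsz : size (g (d - sumn c)%N :: map P c) = l by rewrite /= size_map hc prednK.
have hsz' : size (R (d - sumn c)%N :: map P c) = l by rewrite /= size_map hc prednK.
by rewrite !psi_has0 // inE h0 orbT.
Qed.

Definition wb B (s : seq (nat * V)) := all (fun y => y.1 < B)%N s.

Lemma all_flatten (T : Type) (p : pred T) (ss : seq (seq T)) :
  all p (flatten ss) = all (all p) ss.
Proof. by elim: ss => //= s ss IH; rewrite all_cat IH. Qed.

Lemma wb_mono B B' s : (B <= B')%N -> wb B s -> wb B' s.
Proof. by move=> h /allP hs; apply/allP => y /hs hy; apply: leq_trans hy h. Qed.

Lemma tuples_sum K n c : c \in tuples K n -> (sumn c <= n * K)%N.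
Proof.
elim: n c => [|n IH] c /=; first by rewrite inE => /eqP ->.
case/allpairsPdep => [j [c' [hj hc' ->]]] /=.
move: hj; rewrite mem_iota => /andP [_ hj]; have := IH _ hc'; rewrite mulSn; lia.
Qed.

Lemma wb_adlist B l s : (l <= m)%N -> wb B s -> wb (B + m * q0) (adlist l s).
Proof.
move=> hl /allP hs; apply/all_allpairsP => y c /hs hy /tuples_sum hc /=.
have : (l.-1 * q0 <= m * q0)%N by rewrite leq_mul2r; apply/orP; right; apply: leq_trans (leq_pred _) hl.
lia.
Qed.

Lemma wb_fold B c t : all (fun j => 0 < j < m)%N c -> wb B t ->
  wb (B + size c * (m * q0)) (foldlist c t).
Proof.
elim: c => [|j c IH] /=; first by rewrite mul0n addn0.
move=> /andP [hj hc] ht.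
have hjm : (j.+1 <= m)%N by case/andP: hj.
apply: (wb_mono _ (@wb_adlist _ j.+1 _ hjm (IH hc ht))).
by rewrite mulSn [(m * q0 + _)%N]addnC addnA.
Qed.

Lemma comps_fuel_sum n s c : c \in comps_fuel m n s -> sumn c = s.
Proof.
elim: n s c => [|n IH] s c //=.
case/flattenP => x /mapP [j]; rewrite mem_filter mem_iota => /andP [hjs _] ->.
case: eqP => [-> |_]; first by rewrite inE => /eqP -> /=; rewrite addn0.
by case/mapP => c' /IH hc' -> /=; rewrite hc' subnKC.
Qed.

Lemma size_le_sumn (c : seq nat) : all (fun j => 0 < j)%N c -> (size c <= sumn c)%N.
Proof. elim: c => //= j c IH /andP [hj hc]; have := IH hc; lia. Qed.

Lemma wb_E B s t : wb B t -> wb (B + s * (m * q0)) (Elist s t).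
Proof.
move=> ht; rewrite /wb /Elist all_flatten all_map; apply/allP => c hc /=.
have hc1 := comps_fuel_mem hc; have hc2 := comps_fuel_sum hc.
rewrite all_map; have := wb_fold hc1 ht; rewrite /wb.
have hsz : (size c <= s)%N.
  rewrite -hc2; apply: size_le_sumn; apply/allP => j hj.
  by have := allP hc1 j hj; case/andP.
move/allP => h; apply/allP => y /h /= hy; apply: leq_trans hy _.
by rewrite leq_add2l leq_mul2r hsz orbT.
Qed.

Lemma wb_Z B t : wb B t -> wb (B + s0 * (m * q0)) (Zlist t).
Proof.
move=> ht; rewrite /wb /Zlist all_flatten all_map; apply/allP => s.
rewrite mem_iota => /andP [_ hs] /=; rewrite /E'list.
case: ifP => _.
  by apply: wb_mono ht; apply: leq_addr.
apply: wb_mono (wb_E s ht).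
by rewrite leq_add2l leq_mul2r; apply/orP; right; rewrite -ltnS.
Qed.

Lemma wb_C' : wb (m * q0 + q0) C'list.
Proof.
rewrite /wb /C'list all_cat; apply/andP; split.
  rewrite /Clist all_flatten all_map; apply/allP => l /mem_iota2 hl /=.
  rewrite all_map; apply/allP => c /tuples_sum hc /=.
  have : (l * q0 <= m * q0)%N by rewrite leq_mul2r; case/andP: hl => _ ->; rewrite orbT.
  lia.
rewrite all_map; apply/allP => d; rewrite mem_iota /= => hd.
lia.
Qed.

Definition Dbound := (m * q0 + q0 + s0 * (m * q0))%N.

Lemma T_zero d : (q0 <= d)%N -> (Dbound <= d)%N -> T a d = 0.
Proof.
move=> h1 h2.
have -> : T a d = R d by rewrite /R ltnNge h1.
rewrite Rg /g /coef big1_seq // => y /andP [_ hy].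
have := allP (wb_Z wb_C') y hy; rewrite -/Dbound => hy'.
rewrite ifF //; apply/negbTE; rewrite neq_ltn; apply/orP; left.
by apply: leq_trans hy' h2.
Qed.

End Main.
End Gen.

Lemma pi_Tf (k : fieldType) (m : nat)
  (A : lmodType k) (PsiA : nat -> seq A -> A)
  (B : lmodType k) (PsiB : nat -> seq B -> B)
  (I : pred A) (pi : A -> B) :
  multilinear_ops m PsiA -> multilinear_ops m PsiB ->
  quotient_map m PsiA PsiB I pi ->
  forall a n q, pi (Tf m PsiA a n q) = Tf m PsiB (pi a) n q.
Proof.
move=> MLA MLB [hlin hhom _ _].
have pi0 : pi 0 = 0.
  have := hlin 1 0 0; rewrite !scale1r addr0 => h.
  by apply: (addrI (pi 0)); rewrite addr0 -h.
have piD : {morph pi : x y / x + y}.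
  by move=> x y; have := hlin 1 x y; rewrite !scale1r.
move=> a; elim=> [|n IH] q; first by rewrite /Tf /= !big_nil pi0.
rewrite !Tf_succ // piD; congr (_ + _).
  by case: ifP.
rewrite (big_morph pi piD pi0); apply: eq_big_seq => l /mem_iota2 hl.
rewrite (big_morph pi piD pi0); apply: eq_big_seq => c /comp_mem [hc _ _].
rewrite hhom ?size_map // -map_comp; congr (PsiB l _); apply: eq_map => j /=.
exact: IH.
Qed.

Theorem mainTheorem4 (k : fieldType) (m : nat)
  (A : lmodType k) (PsiA : nat -> seq A -> A)
  (B : lmodType k) (PsiB : nat -> seq B -> B)
  (I : pred A) (pi : A -> B) :
  [pchar k] =i pred0 ->
  is_algebra m PsiA -> is_algebra m PsiB ->
  Engel_type m PsiA ->
  sandwich_ideal m PsiA I ->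
  quotient_map m PsiA PsiB I pi ->
  Yagzhev m PsiB ->
  Yagzhev m PsiA.
Proof.
move=> ch0 [MLA SYA] [MLB SYB] [s0 hE] SW hq [qB hB].
have hpi := pi_Tf MLA MLB hq.
case: hq => _ _ _ hker.
pose q0 := maxn qB 2.
have hq0 : (1 < q0)%N by rewrite leq_maxr.
have hTI : forall a q, (q0 <= q)%N -> T m PsiA a q \in I.
  move=> a q hq; apply/hker.
  rewrite /T hpi; apply: hB.
  by apply: leq_trans hq; rewrite leq_maxl.
exists (maxn q0 (Dbound m q0 s0)) => q hq a.
have h1 : (q0 <= q)%N by apply: leq_trans hq; rewrite leq_maxl.
have h2 : (Dbound m q0 s0 <= q)%N by apply: leq_trans hq; rewrite leq_maxr.
exact: (T_zero MLA SYA SW ch0 hq0 (hTI a) hE h1 h2).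
Qed.
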